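(* Assume the setting described in the context. Let $\pi$ be a permutation of $F$. If $\tau$ is a $\pi$-stable walk with word $W$ and initial state $\sigma_1$, then $R_W\in\mathrm{Ind}(F_{\sigma_1})$.
   Context: Setting: $\Omega$ is a finite set and $F$ a finite set of flaws, each a nonempty subset of $\Omega$; $F_\sigma=\{f:\sigma\in f\}$. For $\sigma\in\Omega$ and $f\in F_\sigma$ there is a probability distribution $\rho(\cdot\mid f,\sigma)$ with support $A(f,\sigma)$. A walk is a sequence $\sigma_1\xrightarrow{w_1}\sigma_2\cdots\xrightarrow{w_t}\sigma_{t+1}$ with $w_i\in F_{\sigma_i}$ and $\sigma_{i+1}\in A(w_i,\sigma_i)$, with word $w_1\ldots w_t$. $\sim$ is a symmetric relation on $F$ (loops allowed), $\Gamma(f)=\{g:f\sim g\}$, $\Gamma^+(f)=\Gamma(f)\cup\{f\}$, $\Gamma^+(S)=\bigcup_{f\in S}\Gamma^+(f)$. It is assumed that for every step $\sigma\xrightarrow{f}\sigma'$, $F_{\sigma'}\subseteq(F_\sigma\setminus\{f\})\cup\Gamma(f)$. $S$ is independent if $f\not\sim g$ for distinct $f,g\in S$; $\mathrm{Ind}(S)$ is the family of independent subsets of $S$. A sequence $(I_1,\ldots,I_s)$, $s\ge1$, is stable if $I_r\in\mathrm{Ind}(F)$ and $I_{r+1}\subseteq\Gamma^+(I_r)$. A word $W$ is stable if $W=W_1\ldots W_s$ with nonempty words $W_r$ of distinct flaws whose flaw sets $I_r$ form a stable sequence. It is $\pi$-stable if additionally each $W_r$ is strictly increasing in the order induced by $\pi$.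 $R_W=I_1$ (and $R_W=\varnothing$ for the empty word). A walk is $\pi$-stable if its word is. *)

(* Defs.v *)
From mathcomp Require Import all_boot all_order all_algebra.
Set Implicit Arguments. Unset Strict Implicit. Unset Printing Implicit Defensive.
Import Order.TTheory GRing.Theory Num.Theory.

Section Defs.
Variable Omega : finType.
Notation flaw := {set Omega}.

Definition Fs (F : {set flaw}) (sigma : Omega) : {set flaw} :=
  [set f in F | sigma \in f].

Definition supp {R : numDomainType} (rho : flaw -> Omega -> Omega -> R)
  (f : flaw) (sigma : Omega) : {set Omega} :=
  [set s' | rho f sigma s' != 0%R].

Definition Gam (F : {set flaw}) (sim : rel flaw) (f : flaw) : {set flaw} :=
  [set g in F | sim f g].
Definition GamP (F : {set flaw}) (sim : rel flaw) (f : flaw) : {set flaw} :=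
  f |: Gam F sim f.
Definition GamPS (F : {set flaw}) (sim : rel flaw) (S : {set flaw}) : {set flaw} :=
  \bigcup_(f in S) GamP F sim f.

Definition indep (sim : rel flaw) (S : {set flaw}) : bool :=
  [forall f in S, forall g in S, (f != g) ==> ~~ sim f g].

Definition inInd (sim : rel flaw) (S I : {set flaw}) : bool :=
  (I \subset S) && indep sim I.

(* A walk from sigma1 given as the list of steps (w_i, sigma_{i+1}) *)
Fixpoint is_walk {R : numDomainType} (F : {set flaw})
  (rho : flaw -> Omega -> Omega -> R) (sigma : Omega)
  (steps : seq (flaw * Omega)) : bool :=
  if steps is (w, s') :: st then
    [&& w \in Fs F sigma, s' \in supp rho w sigma & is_walk F rho s' st]
  else true.

Definition word (steps : seq (flaw * Omega)) : seq flaw := map fst steps.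

(* order induced by the permutation pi (a listing of F): f <_pi g *)
Definition pi_lt (pi : seq flaw) (f g : flaw) : bool := index f pi < index g pi.

Definition pi_stable_dec (F : {set flaw}) (sim : rel flaw) (pi : seq flaw)
  (W : seq flaw) (Ws : seq (seq flaw)) : Prop :=
  (W = flatten Ws /\ Ws != [::]) /\
  [/\
      all (fun Wr => (Wr != [::]) && uniq Wr) Ws,
      all (fun Wr => inInd sim F [set x in Wr]) Ws,
      (forall r, r.+1 < size Ws ->
         [set x in nth [::] Ws r.+1] \subset GamPS F sim [set x in nth [::] Ws r])
    & all (sorted (pi_lt pi)) Ws].

Definition pi_stable F sim pi W : Prop := exists Ws, pi_stable_dec F sim pi W Ws.

Definition R_of (Ws : seq (seq flaw)) : {set flaw} := [set x in head [::] Ws].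

End Defs.

(* Main.v *)
Require Import Defs.
From mathcomp Require Import all_boot all_order all_algebra.
Import Order.TTheory GRing.Theory Num.Theory.
Local Open Scope ring_scope.

Lemma walk_prefix (R : numDomainType) (Omega : finType) (F : {set {set Omega}})
  (rho : {set Omega} -> Omega -> Omega -> R) (sim : rel {set Omega})
  (Hstep : forall sigma f sigma', f \in Fs F sigma -> sigma' \in supp rho f sigma ->
     Fs F sigma' \subset (Fs F sigma :\ f) :|: Gam F sim f) :
  forall steps sigma L rest, is_walk F rho sigma steps ->
  word steps = L ++ rest -> uniq L -> indep sim [set x in L] ->
  {subset L <= Fs F sigma}.
Proof.
elim=> [|[w s'] st IH] sigma L rest /=.
  by case: L.
case: L => [|a L] //= /and3P[Hw Hs Hwk] [<- Hrest] /andP[HwL HuL] Hind.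
have HindL : indep sim [set x in L].
  apply/forallP=> f; apply/implyP=> Hf; apply/forallP=> g; apply/implyP=> Hg.
  move/forallP: Hind => /(_ f); rewrite !inE in Hf *; rewrite Hf orbT /=.
  move/forallP => /(_ g); rewrite !inE in Hg *; by rewrite Hg orbT.
move=> x; rewrite inE => /orP[/eqP -> //|HxL].
have Hx := IH s' L rest Hwk Hrest HuL HindL x HxL.
have := subsetP (Hstep _ _ _ Hw Hs) x Hx.
rewrite !inE => /orP[/andP[_ ->] //|/andP[_ Hsim]].
have Hxw : w != x by apply: contraNneq HwL => ->.
move/forallP: Hind => /(_ w); rewrite !inE eqxx /=.
move/forallP => /(_ x); rewrite !inE HxL orbT /= Hxw /=.
by rewrite Hsim.
Qed.

Theorem lemma3 (R : numDomainType) (Omega : finType) (F : {set {set Omega}})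
  (rho : {set Omega} -> Omega -> Omega -> R) (sim : rel {set Omega})
  (pi : seq {set Omega})
  (HFne : forall f, f \in F -> f != set0)
  (Hrho0 : forall f sigma s', f \in F -> sigma \in f -> 0 <= rho f sigma s')
  (Hrho1 : forall f sigma, f \in F -> sigma \in f -> \sum_(s' : Omega) rho f sigma s' = 1)
  (Hsym : forall f g, f \in F -> g \in F -> sim f g = sim g f)
  (Hstep : forall sigma f sigma', f \in Fs F sigma -> sigma' \in supp rho f sigma ->
     Fs F sigma' \subset (Fs F sigma :\ f) :|: Gam F sim f)
  (Hpi : perm_eq pi (enum F))
  (sigma1 : Omega) (steps : seq ({set Omega} * Omega))
  (Hwalk : is_walk F rho sigma1 steps)
  (Ws : seq (seq {set Omega}))
  (Hst : pi_stable_dec F sim pi (word steps) Ws) :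
  inInd sim (Fs F sigma1) (R_of Ws).
Proof.
case: Hst => [[HW HWs] [Hne Hind _ _]].
case: Ws HW HWs Hne Hind => [//|W1 Ws] /= HW _ /andP[/andP[_ Hu] _] /andP[HI _].
move/andP: HI => [_ HI].
rewrite /inInd /R_of /= HI andbT.
apply/subsetP=> x; rewrite inE => Hx.
exact: (@walk_prefix R Omega F rho sim Hstep _ _ _ _ Hwalk HW Hu HI x Hx).
Qed.
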